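(* There exists a deterministic distributed algorithm with advice (an oracle together with an algorithm) that solves Selection in every anonymous port-labeled graph $G$ whose Selection index $\psi_S(G)$ is finite, using exactly $\psi_S(G)$ communication rounds and advice of size $O((\Delta-1)^{\psi_S(G)}\log \Delta)$, where $\Delta$ is the maximum degree of $G$.
   Context: Networks are simple undirected connected graphs without node identifiers; at each node of degree $d$ incident edges have distinct local port numbers $0,\dots,d-1$. Communication is in the synchronous LOCAL model (all nodes start together; each round every node exchanges arbitrary messages with all neighbors); initially a node knows only its degree. In the advice model, an oracle knowing the whole port-labeled graph $G$ gives the same binary string to all nodes at the start; its length is the size of advice. Selection: exactly one node outputs ''leader'' and all others output ''non-leader''. The Selection index $\psi_S(G)$ is the minimum number of rounds in which Selection can be solved on $G$ by a deterministic algorithm when every node knows the complete map of $G$ (an isomorphic copy with all port numbers); it is finite iff the views of all nodes are distinct, where the view of $v$ is the infinite tree of all finite paths from $v$ coded by their port-number sequences. *)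

(* Defs.v *)
From mathcomp Require Import all_boot.
Set Implicit Arguments. Unset Strict Implicit. Unset Printing Implicit Defensive.

(* Nodes are 0 .. gn-1 (the numbering is only for the oracle / for stating  *)
(* things; nodes never see it).  Node v has degree gdeg v; its port p        *)
(* (p < gdeg v) leads to neighbour gnbr v p, and the edge arrives there at   *)
(* port gback v p.                                                           *)
Record PGraph := mkPGraph {
  gn    : nat;
  gdeg  : nat -> nat;
  gnbr  : nat -> nat -> nat;
  gback : nat -> nat -> nat }.

Fixpoint walk (G : PGraph) (v : nat) (ps : seq nat) : option nat :=
  match ps with
  | [::] => Some v
  | p :: ps' => if p < gdeg G v then walk G (gnbr G v p) ps' else None
  end.

Definition valid_graph (G : PGraph) : Prop :=
  0 < gn G /\
  (forall v p, v < gn G -> p < gdeg G v ->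
     [/\ gnbr G v p < gn G,
         gback G v p < gdeg G (gnbr G v p),
         gnbr G (gnbr G v p) (gback G v p) = v,
         gback G (gnbr G v p) (gback G v p) = p &
         (gnbr G v p <> v /\
          forall q, q < gdeg G v -> gnbr G v q = gnbr G v p -> q = p)]) /\
  (forall u w, u < gn G -> w < gn G -> exists ps, walk G u ps = Some w).

Definition maxdeg (G : PGraph) : nat := \max_(v < gn G) gdeg G v.

(* A node starts knowing only the advice string and its degree.  In each    *)
(* round every node sends on each port p a message (computed from its state *)
(* and p), then updates its state from the messages received, indexed by    *)
(* the local port of arrival (None for non-existing ports).  A node outputs *)
(* the first time [decide] returns Some b (true = leader, false = non-      *)
(* leader); this first output is final.                                     *)
Record Algo := mkAlgo {
  st     : Type;
  msg    : Type;
  init   : seq bool -> nat -> st;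
  send   : st -> nat -> msg;
  step   : st -> (nat -> option msg) -> st;
  decide : st -> option bool }.

Fixpoint states (A : Algo) (G : PGraph) (adv : seq bool) (t : nat) : nat -> st A :=
  match t with
  | 0 => fun v => @init A adv (gdeg G v)
  | t'.+1 =>
      let s := states A G adv t' in
      fun v => @step A (s v)
        (fun p => if p < gdeg G v then Some (@send A (s (gnbr G v p)) (gback G v p))
                  else None)
  end.

Fixpoint first_some (f : nat -> option bool) (k : nat) : option bool :=
  match k with
  | 0 => f 0
  | k'.+1 => match first_some f k' with
             | Some b => Some b
             | None => f k'.+1
             end
  end.

Definition out_by (A : Algo) (G : PGraph) (adv : seq bool) (T v : nat) : option bool :=
  first_some (fun t => @decide A (states A G adv t v)) T.

Definition solves_selection (A : Algo) (G : PGraph) (adv : seq bool) (T : nat) : Prop :=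
  [/\ forall v, v < gn G -> out_by A G adv T v <> None,
      (forall T', T' < T -> exists v, v < gn G /\ out_by A G adv T' v = None) &
      exists l, [/\ l < gn G, out_by A G adv T l = Some true &
                    (forall v, v < gn G -> v <> l -> out_by A G adv T v = Some false)]].

(* Selection index: psi_S(G) = k means k is the minimum number of rounds in
   which Selection can be solved on G by a deterministic algorithm when every
   node knows the complete map of G.  Knowledge of the map is modelled by
   letting the algorithm depend arbitrarily on G (no advice needed). *)
Definition selection_index (G : PGraph) (k : nat) : Prop :=
  (exists A : Algo, solves_selection A G [::] k) /\
  (forall (A : Algo) (T : nat), solves_selection A G [::] T -> k <= T).

(* Main.v *)
Require Import Defs.
From mathcomp Require Import all_boot.
From mathcomp Require Import zify.
From Stdlib Require Import FunctionalExtensionality ClassicalEpsilon Classical.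
Set Implicit Arguments. Unset Strict Implicit. Unset Printing Implicit Defensive.

Fixpoint enc (w n : nat) : seq bool :=
  if w is w'.+1 then odd n :: enc w' n./2 else [::].
Fixpoint dec (s : seq bool) : nat :=
  if s is b :: s' then b + (dec s').*2 else 0.

Lemma size_enc w n : size (enc w n) = w.
Proof. by elim: w n => //= w IH n; rewrite IH. Qed.

Lemma dec_enc w n : n < 2 ^ w -> dec (enc w n) = n.
Proof.
elim: w n => [|w IH] n /=; first by rewrite expn0; case: n.
move=> Hn; rewrite IH ?odd_double_half //.
by rewrite ltn_half_double -mul2n -expnS.
Qed.

Lemma enc_inj w a b : a < 2 ^ w -> b < 2 ^ w -> enc w a = enc w b -> a = b.
Proof. by move=> Ha Hb E; rewrite -(dec_enc Ha) -(dec_enc Hb) E. Qed.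

Fixpoint Lc (w D t : nat) : nat :=
  if t is t'.+1 then w + D.-1 * (1 + w + Lc w D t') else w.
Definition Rt (w D t : nat) : nat :=
  if t is t'.+1 then w + D * (1 + w + Lc w D t') else w.

Definition slot (w D deg t' : nat) (f : nat -> option (nat * seq bool)) (p : nat)
  : seq bool :=
  if p < deg then (if f p is Some (b, c) then true :: enc w b ++ c else [::])
  else nseq (1 + w + Lc w D t') false.

Definition local (w D deg t : nat) (f : nat -> option (nat * seq bool)) (q : nat)
  : seq bool :=
  if t is t'.+1 then
    enc w deg ++ flatten (map (slot w D deg t' f) (filter (fun p => p != q) (iota 0 D)))
  else enc w deg.

Fixpoint F (G : PGraph) (w D t v : nat) {struct t} : nat -> option (nat * seq bool) :=
  match t with
  | 0 => fun _ => None
  | t'.+1 => fun p => if p < gdeg G v then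
       Some (gback G v p, local w D (gdeg G (gnbr G v p)) t' (F G w D t' (gnbr G v p)) (gback G v p))
       else None
  end.

Definition E (G : PGraph) (w D t v q : nat) := local w D (gdeg G v) t (F G w D t v) q.

Definition pk (adv : seq bool) := index false adv.
Definition pr1 (adv : seq bool) := drop (pk adv).+1 adv.
Definition pw (adv : seq bool) := index false (pr1 adv).
Definition pr2 (adv : seq bool) := drop (pw adv).+1 (pr1 adv).
Definition pD (adv : seq bool) := dec (take (pw adv) (pr2 adv)).
Definition pcodes (adv : seq bool) := drop (pw adv) (pr2 adv).
Definition offset (w D t : nat) := sumn [seq Rt w D i | i <- iota 0 t].
Definition target (adv : seq bool) (t : nat) :=
  take (Rt (pw adv) (pD adv) t) (drop (offset (pw adv) (pD adv) t) (pcodes adv)).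

Definition Sst := (seq bool * nat * nat * (nat -> option (nat * seq bool)))%type.

Definition Alg : Algo := @mkAlgo Sst (nat * seq bool)
  (fun adv d => (adv, d, 0, fun _ => None))
  (fun s q => (q, local (pw s.1.1.1) (pD s.1.1.1) s.1.1.2 s.1.2 s.2 q))
  (fun s m => (s.1.1.1, s.1.1.2, s.1.2.+1, m))
  (fun s => if local (pw s.1.1.1) (pD s.1.1.1) s.1.1.2 s.1.2 s.2 (pD s.1.1.1)
               == target s.1.1.1 s.1.2
            then (if s.1.2 < pk s.1.1.1 then None else Some true) else Some false).

Lemma states_Alg G adv t v :
  states Alg G adv t v = (adv, gdeg G v, t, F G (pw adv) (pD adv) t v).
Proof.
elim: t v => [|t IH] v //=.
rewrite [states Alg G adv t v]IH /=.
congr (_, _, _, _); apply: functional_extensionality => p.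
by rewrite IH.
Qed.
Lemma size_flatten_const (T : Type) (s : seq (seq T)) L :
  (forall x, List.In x s -> size x = L) -> size (flatten s) = size s * L.
Proof.
elim: s => //= a s IH H; rewrite size_cat H; last by left.
by rewrite IH ?mulSn // => x Hx; apply: H; right.
Qed.

Lemma flatten_inj_const (T : eqType) (s1 s2 : seq (seq T)) L :
  (forall x, List.In x s1 -> size x = L) -> (forall x, List.In x s2 -> size x = L) ->
  size s1 = size s2 -> flatten s1 = flatten s2 -> s1 = s2.
Proof.
elim: s1 s2 => [|a s1 IH] [|b s2] //= H1 H2 [] Hs Hf.
have Hab : size a = size b by rewrite H1 ?H2 //; left.
move/eqP: Hf; rewrite eqseq_cat // => /andP [/eqP -> /eqP Hf].
congr (_ :: _); apply: IH Hs Hf => x Hx; [apply: H1|apply: H2]; by right.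
Qed.

Lemma map_eq_in (A : eqType) (B : Type) (f g : A -> B) (s : seq A) :
  map f s = map g s -> forall x, x \in s -> f x = g x.
Proof.
elim: s => //= a s IH [] Ha Hs x; rewrite in_cons => /orP [/eqP ->|Hx] //; exact: IH.
Qed.

Lemma size_filter_iota q D :
  size (filter (fun p => p != q) (iota 0 D)) = if q < D then D.-1 else D.
Proof.
elim: D => // D IH.
have -> : iota 0 D.+1 = iota 0 D ++ [:: D] by rewrite -addn1 iotaD.
rewrite filter_cat size_cat IH /=.
case: (ltngtP q D) => H.
- rewrite (ltn_trans H (ltnSn D)) /=; lia.
- rewrite ltnS leqNgt H /=; lia.
- by rewrite H ltnSn /= addn0.
Qed.

Section G.
Variables (G : PGraph) (w D : nat).
Hypothesis HV : valid_graph G.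
Hypothesis HD : forall v, v < gn G -> gdeg G v <= D.
Hypothesis HW : D < 2 ^ w.

Lemma Eeq t v q : E G w D t v q = local w D (gdeg G v) t (F G w D t v) q.
Proof. by []. Qed.

Lemma nbr_ok v p : v < gn G -> p < gdeg G v ->
  [/\ gnbr G v p < gn G, gback G v p < gdeg G (gnbr G v p),
      gnbr G (gnbr G v p) (gback G v p) = v & gback G (gnbr G v p) (gback G v p) = p].
Proof.
move=> Hv Hp; case: HV => _ [H _]; by case: (H v p Hv Hp) => ????[].
Qed.

Lemma size_E t : forall v q, v < gn G ->
  size (E G w D t v q) = if t is t'.+1 then
     w + (if q < D then D.-1 else D) * (1 + w + Lc w D t') else w.
Proof.
elim: t => [|t IH] v q Hv; rewrite /E /local ?size_enc //.
rewrite size_cat size_enc (@size_flatten_const _ _ (1 + w + Lc w D t)).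
  by rewrite size_map size_filter_iota.
move=> x /List.in_map_iff [p [<- Hp]].
rewrite /slot; case: ifP => Hpd; last by rewrite size_nseq.
rewrite /= Hpd /= size_cat size_enc.
have [Hn Hb _ _] := nbr_ok Hv Hpd.
rewrite -/(E G w D t (gnbr G v p) (gback G v p)) IH //.
case: t {IH} => [|t]; first by simpl; lia.
have -> : gback G v p < D by exact: leq_trans Hb (HD Hn).
by simpl; lia.
Qed.

Lemma size_Ec t v q : v < gn G -> q < D -> size (E G w D t v q) = Lc w D t.
Proof. by move=> Hv Hq; rewrite size_E //; case: t => //= t; rewrite Hq. Qed.

Lemma size_Er t v : v < gn G -> size (E G w D t v D) = Rt w D t.
Proof. by move=> Hv; rewrite size_E //; case: t => //= t; rewrite ltnn. Qed.

Lemma E_deg t u x q : u < gn G -> x < gn G ->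
  E G w D t u q = E G w D t x q -> gdeg G u = gdeg G x.
Proof.
move=> Hu Hx; rewrite /E /local.
have Hdu := leq_ltn_trans (HD Hu) HW; have Hdx := leq_ltn_trans (HD Hx) HW.
case: t => [|t]; first exact: enc_inj.
move/eqP; rewrite eqseq_cat ?size_enc // => /andP [/eqP H _]; exact: enc_inj H.
Qed.

Lemma E_decomp t u x q : u < gn G -> x < gn G ->
  E G w D t.+1 u q = E G w D t.+1 x q ->
  forall p, p < gdeg G u -> p != q ->
    gback G u p = gback G x p /\
    E G w D t (gnbr G u p) (gback G u p) = E G w D t (gnbr G x p) (gback G x p).
Proof.
move=> Hu Hx HE p Hp Hpq.
have Hd := E_deg Hu Hx HE.
move: HE; rewrite /E /local; move/eqP; rewrite eqseq_cat ?size_enc // => /andP [_ /eqP HE].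
have Hsl : forall y, y < gn G -> forall z, List.In z
   (map (slot w D (gdeg G y) t (F G w D t.+1 y)) (filter (fun p => p != q) (iota 0 D))) ->
   size z = 1 + w + Lc w D t.
  move=> y Hy z /List.in_map_iff [p' [<- Hp']].
  rewrite /slot; case: ifP => Hpd; last by rewrite size_nseq.
  rewrite /= Hpd /= size_cat size_enc.
  have [Hn Hb _ _] := nbr_ok Hy Hpd.
  rewrite -/(E G w D t (gnbr G y p') (gback G y p')) size_Ec //.
  exact: leq_trans Hb (HD Hn).
have := flatten_inj_const (Hsl _ Hu) (Hsl _ Hx) _ HE.
rewrite !size_map => /(_ erefl) /map_eq_in /(_ p).
have Hin : p \in filter (fun p => p != q) (iota 0 D).
  by rewrite mem_filter Hpq mem_iota /= add0n (leq_trans Hp (HD Hu)).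
move=> /(_ Hin); rewrite /slot /= -Hd Hp /=.
have [Hnu Hbu _ _] := nbr_ok Hu Hp.
have Hpx : p < gdeg G x by rewrite -Hd.
have [Hnx Hbx _ _] := nbr_ok Hx Hpx.
move=> [] /eqP; rewrite eqseq_cat ?size_enc // => /andP [/eqP Hb /eqP Hc].
split => //.
apply: enc_inj Hb.
  exact: ltn_trans (leq_trans Hbu (HD Hnu)) HW.
exact: ltn_trans (leq_trans Hbx (HD Hnx)) HW.
Qed.
End G.
Section C.
Variables (G : PGraph) (w D : nat).
Hypothesis HV : valid_graph G.
Hypothesis HD : forall v, v < gn G -> gdeg G v <= D.
Hypothesis HW : D < 2 ^ w.
Variables (A0 : Algo) (adv : seq bool).
Local Notation SA := (states A0 G adv).

Lemma Cmain t : forall u x q, u < gn G -> x < gn G ->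
  (forall t', t' <= t -> E G w D t' u q = E G w D t' x q) ->
  (q < gdeg G u -> gback G u q = gback G x q /\
      forall t', t' < t -> SA t' (gnbr G u q) = SA t' (gnbr G x q)) ->
  forall t', t' <= t -> SA t' u = SA t' x.
Proof.
elim: t => [|t IH] u x q Hu Hx HE Hpar.
  move=> t'; rewrite leqn0 => /eqP ->.
  by rewrite /= (E_deg HD HW Hu Hx (HE 0 (leqnn 0))).
have H1 : forall t', t' <= t -> SA t' u = SA t' x.
  apply: (IH u x q Hu Hx) => [t' Ht'|Hq].
    by apply: HE; apply: leqW.
  have [Hb Hs] := Hpar Hq; split=> // t' Ht'; apply: Hs; exact: ltnW.
move=> t'; rewrite leq_eqVlt ltnS => /orP [/eqP ->|]; last exact: H1.
have Hd := E_deg HD HW Hu Hx (HE t.+1 (leqnn _)).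
rewrite /= (H1 t (leqnn t)) Hd.
congr (step _ _); apply: functional_extensionality => p.
case: ifP => Hp //.
have Hpu : p < gdeg G u by rewrite Hd.
case: (eqVneq p q) => [Epq|Hpq].
  subst p; have [Hb Hs] := Hpar Hpu.
  by rewrite Hb (Hs t (ltnSn t)).
have [Hb _] := E_decomp HV HD HW Hu Hx (HE t.+1 (leqnn _)) Hpu Hpq.
have [Hnu Hbu Hnnu Hbbu] := nbr_ok HV Hu Hpu.
have [Hnx Hbx Hnnx Hbbx] := nbr_ok HV Hx Hp.
rewrite Hb; congr (Some (send _ _)).
apply: (IH (gnbr G u p) (gnbr G x p) (gback G x p) Hnu Hnx) => //.
  move=> s Hs.
  have [_ HEc] := E_decomp HV HD HW Hu Hx (HE s.+1 Hs) Hpu Hpq.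
  by rewrite -{1}Hb HEc.
move=> _; rewrite -{1 3}Hb Hbbu Hbbx Hnnu; split=> // s Hs.
by rewrite Hnnx; apply: H1; apply: ltnW.
Qed.
End C.
Lemma Lc_bound w D' t : 2 <= D' ->
  Lc w D'.+1 t + 1 + w + (2*w+1) <= 2*(2*w+1) * D'^t.
Proof.
move=> HD; elim: t => [|t IH]; first by rewrite /= expn0; lia.
rewrite /= expnS.
move: IH; set X := D' ^ t; set L := Lc w D'.+1 t => IH.
have HX : 1 <= X by rewrite expn_gt0; lia.
nia.
Qed.

Lemma Rt_bound w D' t : 2 <= D' -> Rt w D'.+1 t <= 5*(2*w+1) * D'^t.
Proof.
move=> HD; case: t => [|t]; first by rewrite /= expn0; lia.
have := Lc_bound w t HD.
rewrite /= expnS; set X := D' ^ t; set L := Lc w D'.+1 t => IH.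
have HX : 1 <= X by rewrite expn_gt0; lia.
nia.
Qed.

Lemma offsetS w D t : offset w D t.+1 = offset w D t + Rt w D t.
Proof.
by rewrite /offset -addn1 iotaD map_cat sumn_cat /= addn0.
Qed.

Lemma off_bound w D' k : 2 <= D' -> offset w D'.+1 k.+1 <= 10*(2*w+1) * D'^k.
Proof.
move=> HD; elim: k => [|k IH]; first by rewrite offsetS /offset /= expn0; lia.
rewrite offsetS.
have := Rt_bound w k.+1 HD.
move: IH; rewrite expnS; set X := D' ^ k => IH HR.
nia.
Qed.

Lemma index_nseq k s : index false (nseq k true ++ false :: s) = k.
Proof. by elim: k => [|k IH] //=; rewrite IH. Qed.
Lemma drop_nseq k s : drop k.+1 (nseq k true ++ false :: s) = s.
Proof. by elim: k => [|k IH] /=; rewrite ?drop0. Qed.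

Definition mkadv k w D codes :=
  nseq k true ++ false :: (nseq w true ++ false :: (enc w D ++ codes)).

Lemma parse_adv k w D codes : D < 2 ^ w ->
  [/\ pk (mkadv k w D codes) = k, pw (mkadv k w D codes) = w,
      pD (mkadv k w D codes) = D & pcodes (mkadv k w D codes) = codes].
Proof.
move=> HW; rewrite /pD /pcodes /pr2 /pw /pr1 /pk /mkadv !index_nseq !drop_nseq !index_nseq !drop_nseq.
rewrite take_size_cat ?size_enc // drop_size_cat ?size_enc //.
by rewrite dec_enc.
Qed.

Lemma first_some_none f T : (forall t, t <= T -> f t = None) -> first_some f T = None.
Proof.
elim: T => [|T IH] H /=; first exact: H.
rewrite IH ?H // => t Ht; apply: H; exact: leqW.
Qed.

Lemma first_some_at f T t0 b : t0 <= T -> (forall t, t < t0 -> f t = None) ->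
  f t0 = Some b -> first_some f T = Some b.
Proof.
elim: T => [|T IH] Ht0 Hlt Hf /=.
  by move: Ht0; rewrite leqn0 => /eqP <-.
move: Ht0; rewrite leq_eqVlt ltnS => /orP [/eqP Ht0|Ht0].
  rewrite first_some_none; first by rewrite -Ht0.
  move=> t Ht; apply: Hlt; rewrite Ht0 ltnS; exact: Ht.
by rewrite (IH Ht0 Hlt Hf).
Qed.

Lemma first_some_ext f g T : (forall t, t <= T -> f t = g t) -> first_some f T = first_some g T.
Proof.
elim: T => [|T IH] H /=; first exact: H.
rewrite IH ?H // => t Ht; apply: H; exact: leqW.
Qed.
Definition codes G w D k l := flatten [seq E G w D i l D | i <- iota 0 k.+1].

Lemma pow_bound D' k : 2 <= D' -> k < D' ^ k.
Proof.
move=> HD; elim: k => [|k IH]; first by rewrite expn0.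
rewrite expnS; nia.
Qed.

Section Tgt.
Variables (G : PGraph) (w D : nat).
Hypothesis HV : valid_graph G.
Hypothesis HD : forall v, v < gn G -> gdeg G v <= D.
Hypothesis HW : D < 2 ^ w.

Lemma size_codes l t : l < gn G ->
  size (flatten [seq E G w D i l D | i <- iota 0 t]) = offset w D t.
Proof.
move=> Hl; rewrite size_flatten /shape -map_comp /offset.
by congr sumn; apply/eq_in_map => i _ /=; rewrite size_Er.
Qed.

Lemma target_eq k l t : l < gn G -> t <= k ->
  target (mkadv k w D (codes G w D k l)) t = E G w D t l D.
Proof.
move=> Hl Htk; have [_ Hw HDp Hc] := parse_adv k (codes G w D k l) HW.
rewrite /target Hw HDp Hc /codes.
have Ht1 : t <= k.+1 by exact: leqW.
rewrite -(subnKC Ht1) iotaD map_cat flatten_cat drop_size_cat; last exact: size_codes.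
rewrite (subSn Htk) /= take_size_cat //; exact: size_Er.
Qed.
End Tgt.

Definition leaderP G (kl : nat * nat) := selection_index G kl.1 /\
  exists A, solves_selection A G [::] kl.1 /\ kl.2 < gn G /\ out_by A G [::] kl.1 kl.2 = Some true.
Definition kl_of G := epsilon (inhabits (0,0)) (leaderP G).
Definition wid G := (trunc_log 2 (maxdeg G)).+1.
Definition oracle G := mkadv (kl_of G).1 (wid G) (maxdeg G)
   (codes G (wid G) (maxdeg G) (kl_of G).1 (kl_of G).2).

Theorem mainTheorem3 :
  exists (A : Algo) (oracle : PGraph -> seq bool) (c : nat),
    forall G : PGraph, valid_graph G ->
    forall k : nat, selection_index G k ->
      solves_selection A G (oracle G) k /\
      (3 <= maxdeg G ->
         size (oracle G) <= c * ((maxdeg G).-1 ^ k * trunc_log 2 (maxdeg G))).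
Proof.
exists Alg, oracle, 100 => G HV k Hsel.
have HD : forall v, v < gn G -> gdeg G v <= maxdeg G.
  move=> v Hv; exact: (leq_bigmax (F := fun i : 'I_(gn G) => gdeg G i) (Ordinal Hv)).
have HW : maxdeg G < 2 ^ wid G by exact: trunc_log_ltn.
have Hex : exists kl, leaderP G kl.
  have [[A0 HA0] _] := Hsel.
  have [_ _ [l0 [Hl0 Hout _]]] := HA0.
  exists (k, l0); split; first exact: Hsel.
  by exists A0; split; [exact: HA0|split].
have HP := epsilon_spec (inhabits (0,0)) (leaderP G) Hex.
rewrite -/(kl_of G) in HP.
rewrite /oracle; case: (kl_of G) HP => k' l [Hsel' [A1 [HA1 [Hl Hout1]]]].
rewrite /= in Hsel' HA1 Hl Hout1 *.
have Ekk : k' = k.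
  have [[A0 HA0] Hmin] := Hsel; have [_ Hmin'] := Hsel'.
  by apply/eqP; rewrite eqn_leq (Hmin' _ _ HA0) (Hmin _ _ HA1).
subst k'.
set w := wid G in HW *; set D := maxdeg G in HD HW *.
set adv := mkadv k w D (codes G w D k l).
have [Hk Hw HDp Hc] := parse_adv k (codes G w D k l) HW.
have Huniq : forall u, u < gn G -> u <> l ->
    exists t, (t <= k) && (E G w D t u D != E G w D t l D).
  move=> u Hu Hul; apply: NNPP => Hno.
  have Heq : forall t, t <= k -> E G w D t u D = E G w D t l D.
    move=> t Ht; case: (eqVneq (E G w D t u D) (E G w D t l D)) => // Hne.
    by case: Hno; exists t; rewrite Ht Hne.
  have Hs' : forall t', t' <= k -> states A1 G [::] t' u = states A1 G [::] t' l.
    apply: (@Cmain G w D HV HD HW A1 [::] k u l D Hu Hl Heq).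
    move=> Hq; exfalso; move: (HD u Hu); rewrite leqNgt Hq //.
  have Ho : out_by A1 G [::] k u = Some true.
    rewrite -Hout1 /out_by; apply: first_some_ext => t Ht; by rewrite Hs'.
  have [_ _ [l1 [Hl1 Ho1 Hoth1]]] := HA1.
  case: (eqVneq l l1) => [El|Nl].
    by subst l1; rewrite Hoth1 in Ho.
  by rewrite Hoth1 in Hout1 => //; apply/eqP.
have Hdec : forall v t, t <= k -> decide (states Alg G adv t v) =
    if E G w D t v D == E G w D t l D then (if t < k then None else Some true) else Some false.
  move=> v t Ht; rewrite states_Alg /= Hw HDp Hk target_eq //.
have Hlead : forall T, T < k -> out_by Alg G adv T l = None.
  move=> T HT; apply: first_some_none => t Ht.
  have Htk : t < k by exact: leq_ltn_trans Ht HT.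
  by rewrite Hdec ?eqxx ?Htk // ltnW.
have Hlk : out_by Alg G adv k l = Some true.
  apply: (@first_some_at _ _ k) => // [t Ht|]; by rewrite Hdec ?eqxx ?Ht ?ltnn // ltnW.
have Hoth : forall v, v < gn G -> v <> l -> out_by Alg G adv k v = Some false.
  move=> v Hv Hvl; have Hx := Huniq v Hv Hvl.
  case: (ex_minnP Hx) => t0 /andP [Ht0 Hne] Hmin.
  apply: (@first_some_at _ _ t0) => //; last by rewrite Hdec // (negbTE Hne).
  move=> t Ht; have Htk : t < k by exact: leq_trans Ht Ht0.
  rewrite Hdec ?(ltnW Htk) // Htk.
  case: (eqVneq (E G w D t v D) (E G w D t l D)) => // Hne'.
  have := Hmin t; rewrite (ltnW Htk) Hne' => /(_ isT); rewrite leqNgt Ht //.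
split.
  split.
  - move=> v Hv; case: (eqVneq v l) => [->|Hvl]; first by rewrite Hlk.
    by rewrite Hoth //; apply/eqP.
  - move=> T HT; exists l; split => //; exact: Hlead.
  - by exists l; split.
move=> H3.
rewrite /adv /mkadv size_cat size_nseq /= size_cat size_nseq /= size_cat size_enc.
rewrite /codes size_codes // -(prednK (ltnW (ltnW H3))).
set D' := D.-1.
have HD' : 2 <= D' by rewrite /D'; lia.
have Hb := off_bound w k HD'.
have Hpk := pow_bound k HD'.
have HL : 0 < trunc_log 2 D by rewrite trunc_log_gt0 /=; lia.
rewrite (prednK (ltnW (ltnW H3))) in Hb Hpk * .
rewrite -/D' /w /wid -/D in Hb *.
move: Hb Hpk HL; set X := D' ^ k; set L := trunc_log 2 D; set O := offset _ _ _.
move=> Hb Hpk HL; nia.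
Qed.
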